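(* Let $P$ and $Q$ be stochastic matrices over a countable set $\Omega$. (1) If $\rho$ is a *-automorphism of $\ell^\infty(\Omega)$ and there exists a $\rho$-similarity from $Arv(P)$ to $Arv(Q)$, then for all $i,j$: $P_{ij}>0\iff Q_{\sigma_\rho(i)\sigma_\rho(j)}>0$. (2) If $\Omega$ is finite, $P$ and $Q$ are essential, and $\sigma$ is a permutation of $\Omega$ with $P_{ij}>0\iff Q_{\sigma(i)\sigma(j)}>0$ for all $i,j$, then there exists a $\rho_\sigma$-similarity from $Arv(P)$ to $Arv(Q)$.
   Context: A stochastic matrix has nonnegative entries and row sums $1$; $P^{(n)}_{ij}$ is the $(i,j)$ entry of $P^n$. $P$ is essential if no state $i$ has some $j$ and $n\ge1$ with $P^{(n)}_{ij}>0$ but $P^{(m)}_{ji}=0$ for all $m\ge1$. For a permutation $\sigma$, $\rho_\sigma(f)=f\circ\sigma^{-1}$; for a *-automorphism $\rho$ of $\ell^\infty(\Omega)$, $\sigma_\rho$ is the permutation with $\rho(p_j)=p_{\sigma_\rho(j)}$, $p_j$ the indicator of $\{j\}$. $Arv(P)$: $Arv(P)_0=\ell^\infty(\Omega)$; $Arv(P)_n$ ($n\ge1$) is the set of complex $\Omega\times\Omega$ matrices $A=[a_{ij}]$ with $a_{ij}=0$ whenever $P^{(n)}_{ij}=0$ and $\sup_j\sum_i|a_{ij}|^2<\infty$, a W*-correspondence over $\ell^\infty(\Omega)$ with actions by diagonal matrices and inner product $\mathrm{Diag}(A^*B)$; $U^P_{n,m}(A\otimes B)=(\sqrt{P^{n+m}})^{\flat}*[(\sqrt{P^n}*A)(\sqrt{P^m}*B)]$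 for $n,m\ge1$ ($*$ entrywise product, $\sqrt\cdot$ entrywise, $M^\flat_{ik}=M_{ik}^{-1}$ if $M_{ik}>0$, else $0$), $U_{0,n},U_{n,0}$ module actions. A $\rho$-similarity $V:Arv(P)\to Arv(Q)$ is a family $(V_n)_{n\ge0}$ with $V_0=\rho$, each $V_n:Arv(P)_n\to Arv(Q)_n$ ($n\ge1$) a bijective bounded linear map with $V_n(a\xi b)=\rho(a)V_n(\xi)\rho(b)$, $\sup_n\max(\|V_n\|,\|V_n^{-1}\|)<\infty$, and $V_{n+m}U^P_{n,m}=U^Q_{n,m}(V_n\otimes V_m)$ for all $n,m$. *)

(* Defs.v *)
From mathcomp Require Import all_boot all_order all_algebra.
From mathcomp Require Import all_classical all_reals all_analysis.
From mathcomp.real_closed Require Import complex.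
Import Order.TTheory GRing.Theory Num.Theory numFieldNormedType.Exports.

Set Implicit Arguments.
Unset Strict Implicit.
Unset Printing Implicit Defensive.

Local Open Scope ring_scope.
Local Open Scope complex_scope.
Local Open Scope classical_set_scope.
Local Open Scope ring_scope.

Section ArvDefs.
Variables (R : realType) (Omega : countType).

Definition rmat := Omega -> Omega -> R.
Definition cmat := Omega -> Omega -> R[i].

(* enumeration of Omega by naturals (each element exactly once) *)
Definition enumf (V : zmodType) (f : Omega -> V) (n : nat) : V :=
  match (pickle_inv n : option Omega) with Some x => f x | None => 0 end.

(* sum over the countable set Omega: limit of partial sums along the
   enumeration (used only for nonnegative or absolutely summable families) *)
Definition rsum (f : Omega -> R) : R := limn (series (enumf f)).
Definition csum (f : Omega -> R[i]) : R[i] :=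
  (rsum (fun x => complex.Re (f x))) +i* (rsum (fun x => complex.Im (f x))).

Definition abs2 (z : R[i]) : R := complex.Re z ^+ 2 + complex.Im z ^+ 2.

Definition stochastic (P : rmat) : Prop :=
  (forall i j, 0 <= P i j) /\
  (forall i, series (enumf (P i)) @ \oo --> (1 : R)).

Fixpoint mpow (P : rmat) (n : nat) : rmat :=
  match n with
  | 0%N => fun i k => if i == k then 1 else 0
  | n'.+1 => fun i k => rsum (fun j => mpow P n' i j * P j k)
  end.

Definition essential (P : rmat) : Prop :=
  ~ (exists i j (n : nat), (0 < n)%N /\ 0 < mpow P n i j /\
        forall m : nat, (0 < m)%N -> mpow P m j i = 0).

Definition linfty (f : Omega -> R[i]) : Prop :=
  exists M : R, forall x, abs2 (f x) <= M.

Definition ptind (j : Omega) : Omega -> R[i] := fun x => if x == j then 1 else 0.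

Definition star_aut (rho : (Omega -> R[i]) -> (Omega -> R[i])) : Prop :=
  (forall f, linfty f -> linfty (rho f)) /\
      (forall f g (c : R[i]), linfty f -> linfty g ->
          rho (fun x => f x + c * g x) = (fun x => rho f x + c * rho g x)) /\
      (forall f g, linfty f -> linfty g ->
          rho (fun x => f x * g x) = (fun x => rho f x * rho g x)) /\
      (forall f, linfty f -> rho (fun x => (f x)^*) = (fun x => (rho f x)^*)) /\
      (forall f g, linfty f -> linfty g -> rho f = rho g -> f = g) /\
      (forall g, linfty g -> exists f, linfty f /\ rho f = g).

Definition colsq (A : cmat) (M : R) : Prop :=
  forall (j : Omega) (s : seq Omega), uniq s -> \sum_(i <- s) abs2 (A i j) <= M.

(* ||A|| <= c in the W*-correspondence norm ||Diag(A^* A)||^(1/2) *)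
Definition norm_le (A : cmat) (c : R) : Prop := colsq A (c ^+ 2).

Definition Arv (P : rmat) (n : nat) (A : cmat) : Prop :=
  (forall i j, mpow P n i j = 0 -> A i j = 0) /\ exists M, colsq A M.

Definition Umul (P : rmat) (n m : nat) (A B : cmat) : cmat :=
  fun i k =>
    let p := mpow P (n + m) i k in
    if 0 < p then
      csum (fun j => (Num.sqrt (mpow P n i j))%:C * A i j *
                     ((Num.sqrt (mpow P m j k))%:C * B j k))
        / (Num.sqrt p)%:C
    else 0.

(* V = (V_n)_{n>=0} with V_0 = rho is a rho-similarity Arv(P) -> Arv(Q);
   V n is only relevant on Arv(P)_n for n >= 1 *)
Definition similarity (P Q : rmat) (rho : (Omega -> R[i]) -> (Omega -> R[i]))
    (V : nat -> cmat -> cmat) : Prop :=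
      (forall n, (0 < n)%N -> forall A, Arv P n A -> Arv Q n (V n A)) /\
      (forall n, (0 < n)%N -> forall A B, Arv P n A -> Arv P n B ->
          V n A = V n B -> A = B) /\
      (forall n, (0 < n)%N -> forall B, Arv Q n B ->
          exists A, Arv P n A /\ V n A = B) /\
      (forall n, (0 < n)%N -> forall A B (c : R[i]), Arv P n A -> Arv P n B ->
          V n (fun i j => A i j + c * B i j) = (fun i j => V n A i j + c * V n B i j)) /\
      (forall n, (0 < n)%N -> forall a b xi, linfty a -> linfty b -> Arv P n xi ->
          V n (fun i j => a i * xi i j * b j) = (fun i j => rho a i * V n xi i j * rho b j)) /\
      (* sup_n max(||V_n||, ||V_n^-1||) < oo *)
      (exists C : R, 0 <= C /\
         forall n, (0 < n)%N -> forall A, Arv P n A -> forall c : R, 0 <= c ->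
           (norm_le A c -> norm_le (V n A) (C * c)) /\
           (norm_le (V n A) c -> norm_le A (C * c))) /\
      (* V_{n+m} U^P_{n,m} = U^Q_{n,m} (V_n (x) V_m) on elementary tensors *)
      (forall n m, (0 < n)%N -> (0 < m)%N -> forall A B, Arv P n A -> Arv P m B ->
          V (n + m)%N (Umul P n m A B) = Umul Q n m (V n A) (V m B)).

End ArvDefs.

(* Main.v *)
Require Import Defs.
From mathcomp Require Import all_boot all_order all_algebra.
From mathcomp Require Import all_classical all_reals all_analysis.
From mathcomp.real_closed Require Import complex.
From mathcomp Require Import zify ring.
Import Order.TTheory GRing.Theory Num.Theory numFieldNormedType.Exports.
Local Open Scope ring_scope.
Local Open Scope complex_scope.
Local Open Scope classical_set_scope.
Local Open Scope ring_scope.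

Section Aux.
Variables (R : realType) (Omega : countType).

Lemma limn_ev (u : nat -> R) c N : (forall n, (N <= n)%N -> u n = c) -> limn u = c.
Proof.
move=> H; apply: norm_lim_near_cst. exists N => // n /= Hn; exact: H.
Qed.

Lemma cvg_ev (u : nat -> R) c d N : (forall n, (N <= n)%N -> u n = c) -> u @ \oo --> d -> c = d.
Proof.
move=> H hc. have hc' : u @ \oo --> c. apply: cvg_near_cst. exists N => // n /= Hn; exact: H.
exact: (cvg_unique _ hc' hc).
Qed.

Lemma sum_ind_nat (p n : nat) (c : R) :
  \sum_(0 <= k < n) (if p == k then c else 0) = if (p < n)%N then c else 0.
Proof.
elim: n => [|n IH]; first by rewrite big_geq.
rewrite big_nat_recr //= IH.
have -> : (p < n.+1)%N = (p == n) || (p < n)%N by rewrite ltnS leq_eqVlt.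
case: eqP => [->|_]; first by rewrite ltnn add0r.
by rewrite addr0.
Qed.

Lemma enumf_sum (f : Omega -> R) (e : seq Omega) k : uniq e ->
  (forall x, x \notin e -> f x = 0) ->
  enumf f k = \sum_(x <- e) (if pickle x == k then f x else 0).
Proof.
move=> ue he; rewrite /enumf.
case hk: (pickle_inv k) => [y|].
  have py : pickle y = k.
    have := pickle_invK (T:=Omega) k. rewrite hk. done.
  case: (boolP (y \in e)) => ye.
    rewrite (bigD1_seq y) //= py eqxx big1 ?addr0 // => x xy.
    case: eqP => // px; move: xy; rewrite -py in px.
    by rewrite (pcan_inj (@pickleK_inv Omega) px) eqxx.
  rewrite big1 ?he // => x _; case: eqP => // px.
  by rewrite -py in px; rewrite (pcan_inj (@pickleK_inv Omega) px) he.
rewrite big1 // => x _; case: eqP => // px.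
by move: hk; rewrite -px pickleK_inv.
Qed.

Lemma series_supp (f : Omega -> R) (e : seq Omega) : uniq e ->
  (forall x, x \notin e -> f x = 0) -> forall n, (\max_(x <- e) (pickle x).+1 <= n)%N ->
  series (enumf f) n = \sum_(x <- e) f x.
Proof.
move=> ue he n hn.
rewrite /series /=.
under eq_bigr do rewrite (enumf_sum f e _ ue he).
rewrite exchange_big /=; apply: eq_bigr => x _.
rewrite sum_ind_nat; case: (boolP (x \in e)) => xe; last by rewrite he // if_same.
suff -> : (pickle x < n)%N by [].
apply: leq_trans hn. exact: (leq_bigmax_seq (F:=fun x => (pickle x).+1)).
Qed.

Lemma rsum_supp (f : Omega -> R) (e : seq Omega) : uniq e ->
  (forall x, x \notin e -> f x = 0) -> rsum f = \sum_(x <- e) f x.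
Proof.
move=> ue he; rewrite /rsum.
apply: (@limn_ev _ _ (\max_(x <- e) (pickle x).+1)). exact: (series_supp f e ue he).
Qed.

Lemma mpow1 (P : rmat R Omega) i k : mpow P 1 i k = P i k.
Proof.
rewrite /= (@rsum_supp _ [:: i]) // ?big_seq1 ?eqxx ?mul1r // => x.
by rewrite inE eq_sym => /negbTE ->; rewrite mul0r.
Qed.

Lemma psum_pos (T : eqType) (s : seq T) (F : T -> R) : (forall x, 0 <= F x) ->
  (0 < \sum_(x <- s) F x) <-> exists2 x, x \in s & 0 < F x.
Proof.
move=> h; elim: s => [|a s IH]; first by rewrite big_nil ltxx; split => // -[].
rewrite big_cons; split.
  move=> hp; case: (ltrP 0 (F a)) => ha; first by exists a; rewrite ?inE ?eqxx.
  have : 0 < \sum_(x <- s) F x.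
    have : F a = 0 by apply/eqP; rewrite eq_le ha h.
    by move=> e0; rewrite e0 add0r in hp.
  by move/IH => [x xs hx]; exists x; rewrite // inE xs orbT.
move=> [x]; rewrite inE => /orP [/eqP -> hx|xs hx].
  by apply: (lt_le_trans hx); rewrite lerDl sumr_ge0.
apply: (lt_le_trans (proj2 IH (ex_intro2 _ _ x xs hx))).
by rewrite lerDr.
Qed.

End Aux.

Section Part1.
Variables (R : realType) (Omega : countType).

Definition Emat (i j : Omega) : cmat R Omega := fun x y => if (x == i) && (y == j) then 1 else 0.

Lemma abs2_ge0 (z : R[i]) : 0 <= abs2 z.
Proof. by rewrite /abs2 addr_ge0 // sqr_ge0. Qed.

Lemma abs2_0 : abs2 (0 : R[i]) = 0.
Proof. by rewrite /abs2 /= expr0n /= addr0. Qed.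

Lemma abs2_1 : abs2 (1 : R[i]) = 1.
Proof. by rewrite /abs2 /= expr0n /= addr0 expr1n. Qed.

Lemma Emat_colsq i j : colsq (Emat i j) 1.
Proof.
move=> y s; elim: s => [|a s IH]; first by rewrite big_nil.
rewrite /= => /andP [ans us]; rewrite big_cons; have := IH us; rewrite /Emat.
case ai: (a == i); case yj: (y == j); rewrite /= ?abs2_0 ?add0r //.
move=> _; rewrite big1_seq ?addr0 ?abs2_1 // => x /= xs.
case xi: (x == i); rewrite /= ?abs2_0 //.
by move: ans; rewrite (eqP ai) -(eqP xi) xs.
Qed.

Lemma colsq0 : colsq (fun _ _ : Omega => (0 : R[i])) 0.
Proof. by move=> y s _; rewrite big1 // => x _; rewrite abs2_0. Qed.

Lemma linfty_ptind (j : Omega) : linfty (ptind R j).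
Proof.
exists 1 => x; rewrite /ptind; case: eqP => _; rewrite ?abs2_1 ?abs2_0 //.
Qed.

Lemma Emat_id i j :
  (fun x y => ptind R i x * Emat i j x y * ptind R j y) = Emat i j.
Proof.
apply/funext => x; apply/funext => y; rewrite /ptind /Emat.
by case: (x == i); case: (y == j); rewrite /= ?mul1r ?mulr1 ?mul0r ?mulr0.
Qed.

Lemma part1 (P Q : rmat R Omega) : stochastic P -> stochastic Q ->
  (forall (rho : (Omega -> R[i]) -> (Omega -> R[i])) (sigma : Omega -> Omega),
     star_aut rho ->
     (forall j : Omega, rho (ptind R j) = ptind R (sigma j)) ->
     (exists V, similarity P Q rho V) ->
     forall i j, 0 < P i j <-> 0 < Q (sigma i) (sigma j)).
Proof.
move=> [Pge0 _] [Qge0 _] rho sigma _ hrho [V [hmap [hinj [hsurj [hlin [hbim [_ _]]]]]]] i j.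
have A0 : Arv P 1 (fun _ _ => 0) by split => //; exists 0; exact: colsq0.
have V0 : V 1%N (fun _ _ => 0) = (fun _ _ => 0).
  have := hlin 1%N isT _ _ 1 A0 A0.
  have -> : (fun _ _ : Omega => (0:R[i]) + 1 * 0) = (fun _ _ => 0).
    by apply/funext => x; apply/funext => y; rewrite mulr0 addr0.
  move=> h; apply/funext => x; apply/funext => y.
  have := congr1 (fun f => f x y) h => /=; rewrite mul1r.
  by rewrite -{1}[V _ _ x y]addr0 => /addrI.
have bim xi : Arv P 1 xi -> V 1%N (fun x y => ptind R i x * xi x y * ptind R j y) =
    (fun x y => ptind R (sigma i) x * V 1%N xi x y * ptind R (sigma j) y).
  move=> hxi; rewrite hbim //; [|exact: linfty_ptind|exact: linfty_ptind].
  by rewrite (hrho i) (hrho j).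
split => hP.
- have EA : Arv P 1 (Emat i j).
    split; last by exists 1; exact: Emat_colsq.
    move=> x y; rewrite mpow1 /Emat; case: andP => // -[/eqP -> /eqP ->] h.
    by move: hP; rewrite h ltxx.
  rewrite lt_def Qge0 andbT; apply/negP => /eqP hQ.
  have W0 : V 1%N (Emat i j) = (fun _ _ => 0).
    have := bim _ EA; rewrite Emat_id => ->.
    apply/funext => x; apply/funext => y; rewrite /ptind.
    case: eqP => [->|]; last by rewrite mul0r mul0r.
    case: eqP => [->|]; last by rewrite mulr0.
    have [hz _] := hmap 1%N isT _ EA.
    by rewrite hz ?mpow1 // mulr0 mul0r.
  have := hinj 1%N isT _ _ EA A0; rewrite W0 V0 => /(_ erefl) h.
  have := congr1 (fun f => f i j) h; rewrite /Emat !eqxx /= => /eqP.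
  by rewrite oner_eq0.
- have EB : Arv Q 1 (Emat (sigma i) (sigma j)).
    split; last by exists 1; exact: Emat_colsq.
    move=> x y; rewrite mpow1 /Emat; case: andP => // -[/eqP -> /eqP ->] h.
    by move: hP; rewrite h ltxx.
  have [A [hA hVA]] := hsurj 1%N isT _ EB.
  have [hAz [M hM]] := hA.
  have hA' : Arv P 1 (fun x y => ptind R i x * A x y * ptind R j y).
    split.
      by move=> x y /hAz ->; rewrite mulr0 mul0r.
    exists M => y s us; apply: le_trans (hM y s us); apply: ler_sum => x _.
    rewrite /ptind; case: (x == i); case: (y == j);
      rewrite ?mul1r ?mulr1 ?mul0r ?mulr0 ?abs2_0 ?abs2_ge0 //.
  have hVA' : V 1%N (fun x y => ptind R i x * A x y * ptind R j y) = V 1%N A.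
    by rewrite bim // hVA Emat_id.
  have eA := hinj 1%N isT _ _ hA' hA hVA'.
  rewrite lt_def Pge0 andbT; apply/negP => /eqP hPz.
  have Aij : A i j = 0 by apply: hAz; rewrite mpow1.
  have AZ : A = (fun _ _ => 0).
    apply/funext => x; apply/funext => y.
    rewrite -eA /ptind; case: eqP => [->|]; last by rewrite mul0r mul0r.
    case: eqP => [->|]; last by rewrite mulr0.
    by rewrite Aij mulr0 mul0r.
  move: hVA; rewrite AZ V0 => h.
  have := congr1 (fun f => f (sigma i) (sigma j)) h; rewrite /Emat !eqxx /= => /eqP.
  by rewrite eq_sym oner_eq0.
Qed.
End Part1.

Section Fin.
Variables (R : realType) (Omega : countType) (e : seq Omega).
Hypotheses (ue : uniq e) (he : forall x, x \in e).

Lemma nin_e x : x \notin e -> False.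
Proof. by rewrite he. Qed.

Lemma series_fin (f : Omega -> R) n : (\max_(x <- e) (pickle x).+1 <= n)%N ->
  series (enumf f) n = \sum_(x <- e) f x.
Proof. by apply: series_supp => // x /nin_e. Qed.

Lemma rsum_fin (f : Omega -> R) : rsum f = \sum_(x <- e) f x.
Proof. by apply: rsum_supp => // x /nin_e. Qed.

Lemma sumC_ReIm (s : seq Omega) (f : Omega -> R[i]) :
  \sum_(x <- s) f x = (\sum_(x <- s) complex.Re (f x)) +i* (\sum_(x <- s) complex.Im (f x)).
Proof.
elim: s => [|a s IH]; first by rewrite !big_nil.
by rewrite !big_cons IH; case: (f a).
Qed.

Lemma csum_fin (f : Omega -> R[i]) : csum f = \sum_(x <- e) f x.
Proof. by rewrite /csum !rsum_fin sumC_ReIm. Qed.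

Lemma mpowS (P : rmat R Omega) n i k :
  mpow P n.+1 i k = \sum_(j <- e) mpow P n i j * P j k.
Proof. by rewrite /= rsum_fin. Qed.

Lemma sum_delta (F : Omega -> R) k :
  \sum_(j <- e) (if j == k then 1 else 0) * F j = F k.
Proof.
rewrite (bigD1_seq k) //= eqxx mul1r big1 ?addr0 // => j /negbTE ->.
by rewrite mul0r.
Qed.

Lemma sum_delta' (F : Omega -> R) k :
  \sum_(j <- e) F j * (if j == k then 1 else 0) = F k.
Proof. rewrite -[RHS](sum_delta F k); apply: eq_bigr => j _; exact: mulrC. Qed.

Lemma mpow_ge0 (P : rmat R Omega) : (forall i j, 0 <= P i j) ->
  forall n i k, 0 <= mpow P n i k.
Proof.
move=> h; elim=> [|n IH] i k /=; first by case: eqP.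
rewrite rsum_fin; apply: sumr_ge0 => j _; exact: mulr_ge0.
Qed.

Lemma rowsum1 (P : rmat R Omega) : stochastic P -> forall i, \sum_(k <- e) P i k = 1.
Proof.
move=> [_ h] i; apply: (@cvg_ev _ _ _ _ (\max_(x <- e) (pickle x).+1) _ (h i)).
exact: series_fin.
Qed.

Lemma mpowD (P : rmat R Omega) n m i k :
  mpow P (n + m) i k = \sum_(j <- e) mpow P n i j * mpow P m j k.
Proof.
elim: m k => [|m IH] k; first by rewrite addn0 /= sum_delta'.
rewrite addnS mpowS.
under eq_bigr do rewrite IH mulr_suml.
rewrite exchange_big; apply: eq_bigr => j _.
rewrite mpowS mulr_sumr; apply: eq_bigr => l _; by rewrite mulrA.
Qed.

Lemma mpow_row (P : rmat R Omega) : stochastic P -> forall n i, \sum_(k <- e) mpow P n i k = 1.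
Proof.
move=> hP; elim=> [|n IH] i.
  by rewrite /= (bigD1_seq i) //= eqxx big1 ?addr0 // => k; rewrite eq_sym => /negbTE ->.
under eq_bigr do rewrite mpowS.
rewrite exchange_big -[RHS](IH i); apply: eq_bigr => j _.
by rewrite -mulr_sumr rowsum1 // mulr1.
Qed.

Lemma mpow_le1 (P : rmat R Omega) : stochastic P -> forall n i k, mpow P n i k <= 1.
Proof.
move=> hP n i k; rewrite -(@mpow_row P hP n i) (bigD1_seq k) //= lerDl.
apply: sumr_ge0 => j _; apply: mpow_ge0; exact: hP.1.
Qed.


Lemma mul_pos (a b : R) : 0 <= a -> 0 <= b -> (0 < a * b) = (0 < a) && (0 < b).
Proof.
move=> ha hb; case: (ltrP 0 a) => h; first by rewrite pmulr_rgt0.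
have -> : a = 0 by apply/eqP; rewrite eq_le h ha.
by rewrite mul0r ltxx.
Qed.

Definition supp (P : rmat R Omega) n i k := 0 < mpow P n i k.

Lemma suppD (P : rmat R Omega) : (forall i j, 0 <= P i j) -> forall n m i k,
  supp P (n + m) i k = has (fun j => supp P n i j && supp P m j k) e.
Proof.
move=> h0 n m i k; rewrite /supp mpowD.
apply/idP/hasP.
  move/psum_pos => [] //.
    by move=> j; apply: mulr_ge0; apply: mpow_ge0.
  move=> j je; rewrite mul_pos ?mpow_ge0 // => hj; by exists j.
move=> [j je hj]; apply/psum_pos.
  by move=> x; apply: mulr_ge0; apply: mpow_ge0.
by exists j; rewrite // mul_pos ?mpow_ge0.
Qed.

Lemma supp1 (P : rmat R Omega) j k : supp P 1 j k = (0 < P j k).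
Proof. by rewrite /supp mpow1. Qed.

Lemma supp_sigma (P Q : rmat R Omega) (sigma sinv : Omega -> Omega) :
  (forall i j, 0 <= P i j) -> (forall i j, 0 <= Q i j) ->
  cancel sigma sinv -> cancel sinv sigma ->
  (forall i j, 0 < P i j <-> 0 < Q (sigma i) (sigma j)) ->
  forall n i k, supp P n i k = supp Q n (sigma i) (sigma k).
Proof.
move=> hP hQ c1 c2 hs; elim=> [|n IH] i k.
  by rewrite /supp /= (inj_eq (can_inj c1)).
rewrite -(addn1 n) !suppD //; apply/hasP/hasP => -[j je /andP [h1 h2]].
  exists (sigma j) => //; rewrite -IH h1 /= supp1 -hs -supp1 //.
exists (sinv j) => //; rewrite IH c2 h1 /= supp1 hs c2 -supp1 //.
Qed.

Lemma supp_step (P : rmat R Omega) : (forall i j, 0 <= P i j) -> forall n n',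
  (forall i k, supp P n i k = supp P n' i k) ->
  (forall i k, supp P n.+1 i k = supp P n'.+1 i k).
Proof.
move=> h0 n n' h i k; rewrite -(addn1 n) -(addn1 n') !suppD //; apply: eq_has => j /=.
by rewrite h.
Qed.

Definition code (P : rmat R Omega) n :=
  [ffun p : seq_sub e * seq_sub e => supp P n (ssval p.1) (ssval p.2)].

Lemma code_eq P n n' : code P n = code P n' -> forall i k, supp P n i k = supp P n' i k.
Proof.
move=> /ffunP h i k; have := h (SeqSub (he i), SeqSub (he k)).
by rewrite !ffunE.
Qed.

Lemma pigeon (P : rmat R Omega) : exists a b, (a < b)%N /\ code P a = code P b.
Proof.
pose T := ({ffun seq_sub e * seq_sub e -> bool} : finType).
set s := map (code P) (iota 0 (#|T|.+1)).
have : ~~ uniq s.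
  apply/negP => us; have := uniq_leq_size us (fun x _ => mem_enum T x).
  by rewrite size_map size_iota -cardE ltnn.
move/(uniqPn (code P 0)) => [a [b [hab hb heq]]].
exists a, b; split => //.
move: heq; rewrite /s size_map size_iota in hb.
by rewrite !(nth_map 0) ?size_iota ?nth_iota //; apply: ltn_trans hb.
Qed.

Lemma periodic (P : rmat R Omega) : (forall i j, 0 <= P i j) ->
  exists a p, (0 < p)%N /\ forall q x i k, supp P (a + x) i k = supp P (a + x + q * p) i k.
Proof.
move=> h0; have [a [b [hab hc]]] := pigeon P.
exists a, (b - a)%N; split; first by lia.
have base : forall x i k, supp P (a + x) i k = supp P (a + (b - a) + x) i k.
  elim=> [|x IH] i k.
    rewrite !addn0 subnKC ?(ltnW hab) //; exact: code_eq.
  rewrite !addnS; exact: supp_step.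
elim=> [|q IH] x i k; first by rewrite mul0n addn0.
rewrite IH (_ : (a + x + q.+1 * (b - a) = a + (b - a) + (x + q * (b - a)))%N); last by lia.
by rewrite -base addnA.
Qed.

Lemma cycle_supp (P : rmat R Omega) : (forall i j, 0 <= P i j) ->
  forall c j k x q, supp P c j j -> supp P x j k -> supp P (q * c + x) j k.
Proof.
move=> h0 c j k x; elim=> [|q IH] hc hx; first by rewrite mul0n.
rewrite mulSn -addnA suppD //; apply/hasP; exists j => //.
by rewrite hc IH.
Qed.

Lemma ess_back (P : rmat R Omega) : (forall i j, 0 <= P i j) -> essential P ->
  forall m i j, (0 < m)%N -> supp P m i j -> exists t, (0 < t)%N /\ supp P t j i.
Proof.
move=> h0 hess m i j hm hs; apply: contrapT => H; apply: hess.
exists i, j, m; split => //; split => // t ht.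
apply/eqP; rewrite eq_le mpow_ge0 // andbT leNgt; apply/negP => pos.
by apply: H; exists t.
Qed.

Lemma key_supp (P : rmat R Omega) : (forall i j, 0 <= P i j) -> essential P ->
  exists a, forall L m i j k, (a <= L)%N -> (0 < m)%N -> supp P m i j ->
     supp P (m + L) i k -> supp P L j k.
Proof.
move=> h0 hess; have [a [p [hp per]]] := periodic _ h0.
exists a => L m i j k haL hm hij hk.
have [t [ht hji]] := ess_back _ h0 hess _ _ _ hm hij.
have hc : supp P (t + m) j j by rewrite suppD //; apply/hasP; exists i; rewrite ?hji.
have h1 : supp P (t + (m + L)) j k by rewrite suppD //; apply/hasP; exists i; rewrite ?hji.
have := cycle_supp _ h0 _ _ _ _ (p.-1) hc h1.
rewrite (_ : (p.-1 * (t + m) + (t + (m + L)) = a + (L - a) + (t + m) * p)%N); last first.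
  have -> : p = p.-1.+1 by lia.
  rewrite mulnS /=; lia.
by rewrite -per (subnKC haL).
Qed.

Lemma min_pos (T : eqType) (l : seq T) (g : T -> R) :
  exists2 d, 0 < d & forall x, x \in l -> 0 < g x -> d <= g x.
Proof.
elim: l => [|a l [d hd IH]]; first by exists 1.
case: (ltrP 0 (g a)) => ha.
  exists (Num.min d (g a)); first by rewrite lt_min hd ha.
  move=> x; rewrite inE => /orP [/eqP ->|xl] hx; rewrite ge_min ?lexx ?orbT //.
  by rewrite IH.
exists d => // x; rewrite inE => /orP [/eqP ->|xl] hx; last exact: IH.
by move: hx; rewrite ltNge ha.
Qed.

Lemma lower_bound (P : rmat R Omega) : stochastic P -> essential P ->
  exists2 d, 0 < d & forall n i k, (0 < n)%N -> 0 < mpow P n i k -> d <= mpow P n i k.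
Proof.
move=> hP hess; have h0 := hP.1.
have [a key] := key_supp _ h0 hess.
have [d hd hl] := min_pos _ [seq (n, ik) | n <- iota 0 a.+1, ik <- [seq (i, k) | i <- e, k <- e]]
   (fun t => mpow P t.1 t.2.1 t.2.2).
have small : forall n i k, (n <= a)%N -> 0 < mpow P n i k -> d <= mpow P n i k.
  move=> n i k hn hpos; apply: (hl (n, (i, k))) => //.
  apply: allpairs_f; first by rewrite mem_iota.
  exact: allpairs_f.
exists d => // n i k hn hpos.
case: (leqP n a) => hna; first exact: small.
have -> : n = ((n - a) + a)%N by rewrite subnK // ltnW.
have hpos' : supp P (n - a + a) i k by rewrite /supp subnK // ltnW.
rewrite mpowD -[d]mul1r -(@mpow_row P hP (n - a) i) mulr_suml.
apply: ler_sum => j _.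
case: (ltrP 0 (mpow P (n - a) i j)) => hij.
  rewrite ler_wpM2l ?mpow_ge0 //; apply: small => //.
  apply: (key a (n - a)%N i j k (leqnn a)) => //; by rewrite subn_gt0.
have -> : mpow P (n - a) i j = 0 by apply/eqP; rewrite eq_le hij mpow_ge0.
by rewrite !mul0r.
Qed.


Lemma reindex (V : zmodType) (f g : Omega -> Omega) : cancel f g -> cancel g f ->
  forall F : Omega -> V, \sum_(y <- e) F y = \sum_(j <- e) F (f j).
Proof.
move=> c1 c2 F; transitivity (\sum_(y <- map f e) F y); last by rewrite big_map.
apply: perm_big.
apply: uniq_perm => //; first by rewrite (map_inj_uniq (can_inj c1)).
move=> x; rewrite he; apply/esym/mapP; exists (g x); rewrite ?he //.
Qed.

Lemma sum_sub_le (s : seq Omega) (F : Omega -> R) : uniq s -> (forall x, 0 <= F x) ->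
  \sum_(x <- s) F x <= \sum_(x <- e) F x.
Proof.
move=> us h0; rewrite [X in _ <= X](bigID (fun x => x \in s)) /= -[X in _ <= X + _]big_filter.
have pe : perm_eq [seq x <- e | x \in s] s.
  apply: uniq_perm => //; first exact: filter_uniq.
  by move=> x; rewrite mem_filter he andbT.
by rewrite (perm_big _ pe) lerDl sumr_ge0.
Qed.

Lemma colsq_fin (A : cmat R Omega) : exists M, colsq A M.
Proof.
exists (\sum_(j <- e) \sum_(i <- e) abs2 (A i j)) => j s us.
apply: le_trans (sum_sub_le s (fun i => abs2 (A i j)) us (fun x => abs2_ge0 _ _)) _.
rewrite [X in _ <= X](bigD1_seq j) //= lerDl; apply: sumr_ge0 => k _.
by apply: sumr_ge0 => x _; exact: abs2_ge0.
Qed.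

Lemma abs2Mr (z : R[i]) (t : R) : abs2 (z * t%:C) = abs2 z * t ^+ 2.
Proof. by case: z => a b; rewrite /abs2 /=; ring. Qed.

Section Constr.
Variables (P Q : rmat R Omega) (sigma sinv : Omega -> Omega).
Hypotheses (hP : stochastic P) (hQ : stochastic Q)
  (c1 : cancel sigma sinv) (c2 : cancel sinv sigma)
  (hs : forall i j, 0 < P i j <-> 0 < Q (sigma i) (sigma j)).


Definition rr n i k : R := Num.sqrt (mpow P n i k) / Num.sqrt (mpow Q n (sigma i) (sigma k)).
Definition ww n i k : R := Num.sqrt (mpow Q n (sigma i) (sigma k)) / Num.sqrt (mpow P n i k).

Definition Vdef (n : nat) (A : cmat R Omega) : cmat R Omega :=
  fun x y => A (sinv x) (sinv y) * (rr n (sinv x) (sinv y))%:C.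

Lemma hsupp n i k : (0 < mpow Q n (sigma i) (sigma k)) = (0 < mpow P n i k).
Proof. by have := supp_sigma _ _ _ _ hP.1 hQ.1 c1 c2 hs n i k; rewrite /supp => ->. Qed.

Lemma P0 n i k : ~~ (0 < mpow P n i k) -> mpow P n i k = 0.
Proof. by move=> h; apply/eqP; rewrite eq_le (mpow_ge0 _ hP.1) andbT leNgt. Qed.

Lemma Q0 n i k : ~~ (0 < mpow Q n i k) -> mpow Q n i k = 0.
Proof. by move=> h; apply/eqP; rewrite eq_le (mpow_ge0 _ hQ.1) andbT leNgt. Qed.

Lemma sq_rr n i k : Num.sqrt (mpow Q n (sigma i) (sigma k)) * rr n i k = Num.sqrt (mpow P n i k).
Proof.
rewrite /rr; case: (boolP (0 < mpow P n i k)) => h.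
  have hq : Num.sqrt (mpow Q n (sigma i) (sigma k)) != 0.
    by rewrite gt_eqF // sqrtr_gt0 hsupp.
  by rewrite mulrC divfK.
by rewrite P0 // sqrtr0 mul0r mulr0.
Qed.

Lemma rr0 n i k : ~~ (0 < mpow P n i k) -> rr n i k = 0.
Proof. by move=> h; rewrite /rr P0 // sqrtr0 mul0r. Qed.

Lemma rr_neq0 n i k : 0 < mpow P n i k -> rr n i k != 0.
Proof.
move=> h; rewrite /rr mulf_neq0 // ?invr_eq0 gt_eqF // sqrtr_gt0 ?hsupp //.
Qed.

Lemma Vdef_sig n A i k : Vdef n A (sigma i) (sigma k) = A i k * (rr n i k)%:C.
Proof. by rewrite /Vdef !c1. Qed.

Lemma cocycle n m A B :
  Vdef (n + m) (Umul P n m A B) = Umul Q n m (Vdef n A) (Vdef m B).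
Proof.
apply/funext => x; apply/funext => z; rewrite -(c2 x) -(c2 z).
move: (sinv x) (sinv z) => i k; rewrite Vdef_sig /Umul hsupp !csum_fin.
rewrite [in RHS](reindex _ _ _ c1 c2).
have -> : \sum_(j <- e) ((Num.sqrt (mpow Q n (sigma i) (sigma j)))%:C * Vdef n A (sigma i) (sigma j) *
    ((Num.sqrt (mpow Q m (sigma j) (sigma k)))%:C * Vdef m B (sigma j) (sigma k))) =
   \sum_(j <- e) ((Num.sqrt (mpow P n i j))%:C * A i j * ((Num.sqrt (mpow P m j k))%:C * B j k)).
  apply: eq_bigr => j _; rewrite !Vdef_sig.
  rewrite -(sq_rr n i j) -(sq_rr m j k) !rmorphM /=; ring.
case: ifP => h; last by rewrite mul0r.
have hp : (Num.sqrt (mpow P (n + m) i k))%:C != 0 by rewrite fmorph_eq0 gt_eqF // sqrtr_gt0.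
have hq : (Num.sqrt (mpow Q (n + m) (sigma i) (sigma k)))%:C != 0.
  by rewrite fmorph_eq0 gt_eqF // sqrtr_gt0 hsupp.
rewrite /rr fmorph_div /=; field.
by rewrite hp hq.
Qed.


Lemma Vdef_Arv n A : Arv P n A -> Arv Q n (Vdef n A).
Proof.
move=> [hz _]; split; last exact: colsq_fin.
move=> x y; rewrite -(c2 x) -(c2 y); move: (sinv x) (sinv y) => i k h.
rewrite Vdef_sig rr0 ?rmorph0 ?mulr0 // -hsupp h ltxx //.
Qed.

Lemma Vdef_inj n A B : Arv P n A -> Arv P n B -> Vdef n A = Vdef n B -> A = B.
Proof.
move=> [hA _] [hB _] h; apply/funext => i; apply/funext => k.
case: (boolP (0 < mpow P n i k)) => hp; last by rewrite (hA i k (P0 _ _ _ hp)) (hB i k (P0 _ _ _ hp)).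
have := congr1 (fun f => f (sigma i) (sigma k)) h; rewrite /= !Vdef_sig.
by move/mulIf; apply; rewrite fmorph_eq0 rr_neq0.
Qed.

Lemma Vdef_surj n B : Arv Q n B -> exists A, Arv P n A /\ Vdef n A = B.
Proof.
move=> [hB _].
exists (fun i k => B (sigma i) (sigma k) * (ww n i k)%:C); split.
  split; last exact: colsq_fin.
  by move=> i k h; rewrite /ww h sqrtr0 invr0 mulr0 rmorph0 mulr0.
apply/funext => x; apply/funext => y; rewrite -(c2 x) -(c2 y).
move: (sinv x) (sinv y) => i k; rewrite Vdef_sig -mulrA -rmorphM /=.
case: (boolP (0 < mpow P n i k)) => hp.
  rewrite /ww /rr mulrA divfK ?gt_eqF ?sqrtr_gt0 // divff ?rmorph1 ?mulr1 //.
  by rewrite gt_eqF // sqrtr_gt0 hsupp.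
have hq : mpow Q n (sigma i) (sigma k) = 0 by apply: Q0; rewrite hsupp.
by rewrite (hB _ _ hq) mul0r.
Qed.

Lemma Vdef_lin n A B (c : R[i]) :
  Vdef n (fun i j => A i j + c * B i j) = (fun i j => Vdef n A i j + c * Vdef n B i j).
Proof.
apply/funext => x; apply/funext => y; by rewrite /Vdef mulrDl -mulrA.
Qed.

Lemma Vdef_bim n a b xi :
  Vdef n (fun i j => a i * xi i j * b j) =
  (fun i j => (a \o sinv) i * Vdef n xi i j * (b \o sinv) j).
Proof.
apply/funext => x; apply/funext => y; rewrite /Vdef /= -!mulrA; congr (_ * (_ * _)).
exact: mulrC.
Qed.


Lemma Vdef_bound : essential P -> essential Q ->
  exists C : R, 0 <= C /\
    forall n, (0 < n)%N -> forall A, Arv P n A -> forall c : R, 0 <= c ->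
      (norm_le A c -> norm_le (Vdef n A) (C * c)) /\
      (norm_le (Vdef n A) c -> norm_le A (C * c)).
Proof.
move=> eP eQ.
have [dP hdP lbP] := lower_bound _ hP eP.
have [dQ hdQ lbQ] := lower_bound _ hQ eQ.
pose d := Num.min dP dQ.
have hd : 0 < d by rewrite lt_min hdP hdQ.
have hdi : 0 <= d^-1 by rewrite invr_ge0 ltW.
have dleP : d <= dP by rewrite ge_min lexx.
have dleQ : d <= dQ by rewrite ge_min lexx orbT.
have rr2 : forall n i k, rr n i k ^+ 2 = mpow P n i k / mpow Q n (sigma i) (sigma k).
  move=> n i k; rewrite /rr expr_div_n !sqr_sqrtr //; [exact: (mpow_ge0 _ hQ.1) | exact: (mpow_ge0 _ hP.1)].
have F1 : forall n i k, (0 < n)%N -> rr n i k ^+ 2 <= d^-1.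
  move=> n i k hn; case: (boolP (0 < mpow P n i k)) => hp; last first.
    by rewrite rr0 // expr0n.
  have hq : 0 < mpow Q n (sigma i) (sigma k) by rewrite hsupp.
  rewrite rr2 ler_pdivrMr //.
  apply: (le_trans (mpow_le1 _ hP n i k)).
  rewrite -(mulVf (negbT (gt_eqF hd))) ler_wpM2l //.
  exact: le_trans dleQ (lbQ _ _ _ hn hq).
have F2 : forall n i k, (0 < n)%N -> 0 < mpow P n i k -> 1 <= rr n i k ^+ 2 * d^-1.
  move=> n i k hn hp.
  have hq : 0 < mpow Q n (sigma i) (sigma k) by rewrite hsupp.
  rewrite -(mulfV (negbT (gt_eqF hd))) ler_wpM2r // rr2.
  apply: (le_trans (le_trans dleP (lbP _ _ _ hn hp))).
  rewrite ler_pdivlMr // ler_piMr // ?(mpow_ge0 _ hP.1) //.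
  exact: mpow_le1.
exists (Num.sqrt d^-1); split; first exact: sqrtr_ge0.
move=> n hn A [hA _] c hc.
have eC : (Num.sqrt d^-1 * c) ^+ 2 = c ^+ 2 * d^-1 by rewrite exprMn sqr_sqrtr // mulrC.
split.
  move=> hAc y s us; rewrite /norm_le eC.
  apply: (le_trans (y := \sum_(x <- s) abs2 (A (sinv x) (sinv y)) * d^-1)).
    apply: ler_sum => x _; rewrite /Vdef abs2Mr ler_wpM2l ?abs2_ge0 //; exact: F1.
  rewrite -mulr_suml ler_wpM2r // -(big_map sinv xpredT (fun i => abs2 (A i (sinv y)))).
  by apply: hAc; rewrite (map_inj_uniq (can_inj c2)).
move=> hVc j s us; rewrite /norm_le eC.
apply: (le_trans (y := \sum_(i <- s) abs2 (Vdef n A (sigma i) (sigma j)) * d^-1)).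
  apply: ler_sum => i _; rewrite Vdef_sig abs2Mr.
  case: (boolP (0 < mpow P n i j)) => hp; last first.
    rewrite hA ?abs2_0 ?mul0r //; exact: P0.
  rewrite -mulrA -{1}[abs2 (A i j)]mulr1 ler_wpM2l ?abs2_ge0 //; exact: F2.
rewrite -mulr_suml ler_wpM2r // -(big_map sigma xpredT (fun x => abs2 (Vdef n A x (sigma j)))).
by apply: hVc; rewrite (map_inj_uniq (can_inj c1)).
Qed.

End Constr.

End Fin.

Theorem mainTheorem10 (R : realType) (Omega : countType) (P Q : rmat R Omega) :
  stochastic P -> stochastic Q ->
  (* (1) *)
  (forall (rho : (Omega -> R[i]) -> (Omega -> R[i])) (sigma : Omega -> Omega),
     star_aut rho ->
     (forall j : Omega, rho (ptind R j) = ptind R (sigma j)) ->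
     (exists V, similarity P Q rho V) ->
     forall i j, 0 < P i j <-> 0 < Q (sigma i) (sigma j)) /\
  (* (2) *)
  ((exists s : seq Omega, forall x, x \in s) ->
   essential P -> essential Q ->
   forall sigma sigma_inv : Omega -> Omega,
     cancel sigma sigma_inv -> cancel sigma_inv sigma ->
     (forall i j, 0 < P i j <-> 0 < Q (sigma i) (sigma j)) ->
     exists V, similarity P Q (fun f => f \o sigma_inv) V).
Proof.
move=> hP hQ; split; first exact: part1.
move=> [s hs] eP eQ sigma sinv c1 c2 hsig.
have ue : uniq (undup s) := undup_uniq s.
have he : forall x, x \in undup s by move=> x; rewrite mem_undup.
exists (Vdef R Omega P Q sigma sinv).
split; first by move=> n _ A; exact: (@Vdef_Arv _ _ _ ue he _ _ _ _ hP hQ c1 c2 hsig).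
split; first by move=> n _ A B; exact: (@Vdef_inj _ _ _ ue he _ _ _ _ hP hQ c1 c2 hsig).
split; first by move=> n _ B; exact: (@Vdef_surj _ _ _ ue he _ _ _ _ hP hQ c1 c2 hsig).
split; first by move=> n _ A B c _ _; exact: Vdef_lin.
split; first by move=> n _ a b xi _ _ _; exact: Vdef_bim.
split; first exact: (@Vdef_bound _ _ _ ue he _ _ _ _ hP hQ c1 c2 hsig eP eQ).
by move=> n m _ _ A B _ _; exact: (@cocycle _ _ _ ue he _ _ _ _ hP hQ c1 c2 hsig).
Qed.
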